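(* Let $A\subset\mathbb A$ be an essential thin annular continuum and let $S$ be a spike of $A$ with $h(S)<\infty$. Then $\overline S\cap C_{\hat A}\neq\emptyset$.
   Context: $\mathbb A=\mathbb S^1\times\mathbb R$, $\pi:\mathbb R^2\to\mathbb A$. An essential annular continuum $A$ is a continuum with $\mathbb A\setminus A$ exactly two components $\mathcal U^+(A),\mathcal U^-(A)$, unbounded above resp. below; thin means empty interior; $C_A=\overline{\mathcal U^+(A)}\cap\overline{\mathcal U^-(A)}$; $\hat A=\pi^{-1}(A)$, $C_{\hat A}=\pi^{-1}(C_A)$. For $X\subset\mathbb R^2$, $h(X)=\sup\{x_1-x_2:(x_1,y_1),(x_2,y_2)\in X\}$. Spikes of $A$ are the connected components of $\hat A\setminus C_{\hat A}$. *)

(* Defs.v *)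
From Stdlib Require Import Reals List.
Open Scope R_scope.

Definition pt := (R * R)%type.
Definition pset := pt -> Prop.

(* deck transformation generating the covering pi : R^2 -> A *)
Definition T1 (p : pt) : pt := (fst p + 1, snd p).

(* subsets of the annulus are represented by their lifts: T1-invariant subsets of R^2 *)
Definition invariant (X : pset) : Prop := forall p, X p <-> X (T1 p).

Definition near (e : R) (p q : pt) : Prop :=
  Rabs (fst p - fst q) < e /\ Rabs (snd p - snd q) < e.

Definition open2 (U : pset) : Prop :=
  forall p, U p -> exists e, 0 < e /\ forall q, near e p q -> U q.

(* closure in R^2 (for invariant sets it is the lift of the closure in A) *)
Definition closure2 (X : pset) : pset :=
  fun p => forall e, 0 < e -> exists q, X q /\ near e p q.

(* open sets of the annulus = lifts of open sets = invariant open sets of R^2 *)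
Definition openA (U : pset) : Prop := invariant U /\ open2 U.

Definition connected_wrt (op : pset -> Prop) (X : pset) : Prop :=
  ~ exists U V, op U /\ op V /\
      (forall p, X p -> U p \/ V p) /\
      (exists p, X p /\ U p) /\ (exists p, X p /\ V p) /\
      (forall p, X p -> U p -> V p -> False).

Definition component_wrt (op : pset -> Prop) (C Y : pset) : Prop :=
  (exists p, C p) /\ (forall p, C p -> Y p) /\ connected_wrt op C /\
  forall D : pset, (forall p, C p -> D p) -> (forall p, D p -> Y p) ->
    connected_wrt op D -> forall p, D p -> C p.

Definition connectedA := connected_wrt openA.
Definition componentA (C Y : pset) : Prop := invariant C /\ component_wrt openA C Y.

Definition compactA (X : pset) : Prop :=
  forall (I : Type) (U : I -> pset), (forall i, openA (U i)) ->
    (forall p, X p -> exists i, U i p) ->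
    exists l : list I, forall p, X p -> exists i, In i l /\ U i p.

Definition continuumA (X : pset) : Prop :=
  invariant X /\ (exists p, X p) /\ compactA X /\ connectedA X.

Definition complement (X : pset) : pset := fun p => ~ X p.

Definition unbounded_above (X : pset) : Prop := forall M, exists p, X p /\ M < snd p.
Definition unbounded_below (X : pset) : Prop := forall M, exists p, X p /\ snd p < M.

Definition essential_annular (A Up Um : pset) : Prop :=
  continuumA A /\
  componentA Up (complement A) /\ componentA Um (complement A) /\
  (exists p, Up p /\ ~ Um p) /\
  (forall C, componentA C (complement A) -> (forall p, C p <-> Up p) \/ (forall p, C p <-> Um p)) /\
  unbounded_above Up /\ unbounded_below Um.

Definition thin (A : pset) : Prop :=
  forall U, openA U -> (forall p, U p -> A p) -> forall p, ~ U p.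

(* C_{\hat A} = pi^{-1}(C_A) = closure(U^+ lift) /\ closure(U^- lift) *)
Definition CAhat (Up Um : pset) : pset := fun p => closure2 Up p /\ closure2 Um p.

Definition spike (A Up Um S : pset) : Prop :=
  component_wrt open2 S (fun p => A p /\ ~ CAhat Up Um p).

Definition h_finite (S : pset) : Prop :=
  exists M, forall p q, S p -> S q -> fst p - fst q <= M.

(* Main.v *)
Require Import Defs.
From Stdlib Require Import Reals List Lra Lia ZArith Classical.
Open Scope R_scope.

Lemma near_iff e p q : near e p q <-> (fst q - fst p < e /\ fst p - fst q < e /\ snd q - snd p < e /\ snd p - snd q < e).
Proof.
  unfold near; split.
  - intros [H1 H2]. apply Rabs_def2 in H1. apply Rabs_def2 in H2. lra.
  - intros H. split; apply Rabs_def1; lra.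
Qed.

Ltac nrh := repeat match goal with H : near _ _ _ |- _ => apply near_iff in H end.
Ltac nr := nrh; try (apply near_iff); simpl in *; lra.

Lemma near_refl e p : 0 < e -> near e p p.
Proof. intros; nr. Qed.
Lemma near_sym e p q : near e p q -> near e q p.
Proof. intros; nr. Qed.
Lemma near_trans e1 e2 p q r : near e1 p q -> near e2 q r -> near (e1+e2) p r.
Proof. intros; nr. Qed.
Lemma near_mono e1 e2 p q : e1 <= e2 -> near e1 p q -> near e2 p q.
Proof. intros; nr. Qed.

Definition closed2 (X : pset) : Prop := forall p, closure2 X p -> X p.
Definition compact2 (X : pset) : Prop :=
  forall (I : Type) (U : I -> pset), (forall i, open2 (U i)) ->
    (forall p, X p -> exists i, U i p) ->
    exists l : list I, forall p, X p -> exists i, In i l /\ U i p.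

Lemma closure_sub X p : X p -> closure2 X p.
Proof. intros H e He. exists p. split; auto. apply near_refl; auto. Qed.

Lemma closure_mono (X Y : pset) p : (forall q, X q -> Y q) -> closure2 X p -> closure2 Y p.
Proof. intros H Hc e He. destruct (Hc e He) as [q [Xq Nq]]. exists q; auto. Qed.

Lemma closure_closed X : closed2 (closure2 X).
Proof.
  intros p Hp e He. destruct (Hp (e/2)) as [q [Hq Nq]]; [lra|].
  destruct (Hq (e/2)) as [r [Hr Nr]]; [lra|]. exists r. split; auto.
  replace e with (e/2+e/2) by field. eapply near_trans; eauto.
Qed.

Lemma not_closure X p : ~ closure2 X p -> exists e, 0 < e /\ forall q, near e p q -> ~ X q.
Proof.
  intros Hn. apply NNPP; intro H. apply Hn. intros e He. apply NNPP; intro H2.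
  apply H. exists e. split; auto. intros q Hq Xq. apply H2. exists q; auto.
Qed.

Lemma closed_open_compl X : closed2 X -> open2 (fun p => ~ X p).
Proof.
  intros HX p Hp. assert (~ closure2 X p) by auto.
  destruct (not_closure X p H) as [e [He H2]]. exists e; split; auto.
Qed.

Lemma open_compl_closed U : open2 U -> closed2 (fun p => ~ U p).
Proof.
  intros HU p Hp Up. destruct (HU p Up) as [e [He H]].
  destruct (Hp e He) as [q [Hq Nq]]. apply Hq, H, Nq.
Qed.

Lemma closed_and P Q : closed2 P -> closed2 Q -> closed2 (fun p => P p /\ Q p).
Proof.
  intros HP HQ p Hp. split; [apply HP|apply HQ].
  - apply (closure_mono (fun p => P p /\ Q p) P p); [tauto|exact Hp].
  - apply (closure_mono (fun p => P p /\ Q p) Q p); [tauto|exact Hp].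
Qed.

Lemma closed_inter_open_compl Q V : closed2 Q -> open2 V -> closed2 (fun p => Q p /\ ~ V p).
Proof.
  intros HQ HV. apply closed_and; auto. apply open_compl_closed; auto.
Qed.

Lemma open_ball e c : open2 (near e c).
Proof.
  intros p Hp. apply near_iff in Hp.
  set (e' := Rmin (Rmin (e - (fst p - fst c)) (e - (fst c - fst p))) (Rmin (e - (snd p - snd c)) (e - (snd c - snd p)))).
  assert (H1 : e' <= e - (fst p - fst c)) by (unfold e'; eapply Rle_trans; [apply Rmin_l|apply Rmin_l]).
  assert (H2 : e' <= e - (fst c - fst p)) by (unfold e'; eapply Rle_trans; [apply Rmin_l|apply Rmin_r]).
  assert (H3 : e' <= e - (snd p - snd c)) by (unfold e'; eapply Rle_trans; [apply Rmin_r|apply Rmin_l]).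
  assert (H4 : e' <= e - (snd c - snd p)) by (unfold e'; eapply Rle_trans; [apply Rmin_r|apply Rmin_r]).
  assert (H0 : 0 < e').
  { unfold e'. repeat apply Rmin_glb_lt; lra. }
  exists e'. split; auto. intros q Hq. nr.
Qed.

Lemma open_cond_ball (C : Prop) e c : open2 (fun p => C /\ near e c p).
Proof.
  intros p [HC Hp]. destruct (open_ball e c p Hp) as [e' [He' H]]. exists e'. split; auto.
Qed.

Lemma open_ex {I : Type} (F : I -> pset) : (forall i, open2 (F i)) -> open2 (fun p => exists i, F i p).
Proof.
  intros H p [i Hi]. destruct (H i p Hi) as [e [He H2]]. exists e. split; auto.
  intros q Hq. exists i. auto.
Qed.

Lemma open_and U V : open2 U -> open2 V -> open2 (fun p => U p /\ V p).
Proof.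
  intros HU HV p [Up Vp]. destruct (HU p Up) as [e1 [He1 H1]]. destruct (HV p Vp) as [e2 [He2 H2]].
  exists (Rmin e1 e2). split; [apply Rmin_glb_lt; auto|].
  intros q Hq. split; [apply H1|apply H2]; eapply near_mono; eauto; [apply Rmin_l|apply Rmin_r].
Qed.

Lemma open_or U V : open2 U -> open2 V -> open2 (fun p => U p \/ V p).
Proof.
  intros HU HV p [Up|Vp].
  - destruct (HU p Up) as [e [He H]]. exists e. split; auto.
  - destruct (HV p Vp) as [e [He H]]. exists e. split; auto.
Qed.

Lemma open_list_inter {I : Type} (F : I -> pset) (l : list I) :
  (forall i, open2 (F i)) -> open2 (fun p => forall i, In i l -> F i p).
Proof.
  intros HF. induction l as [|a l IH].
  - intros p _. exists 1. split; [lra|]. intros q _ i [].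
  - intros p Hp. destruct (HF a p (Hp a (or_introl eq_refl))) as [e1 [He1 H1]].
    destruct (IH p (fun i Hi => Hp i (or_intror Hi))) as [e2 [He2 H2]].
    exists (Rmin e1 e2). split; [apply Rmin_glb_lt; auto|].
    intros q Hq i [<-|Hi].
    + apply H1. eapply near_mono; [apply Rmin_l|eauto].
    + apply (H2 q); auto. eapply near_mono; [apply Rmin_r|eauto].
Qed.

Lemma min_list (l : list R) : exists d, 0 < d /\ forall x, In x l -> 0 < x -> d <= x.
Proof.
  induction l as [|a l [d [Hd H]]].
  - exists 1. split; [lra|]. intros x [].
  - destruct (Rlt_dec 0 a).
    + exists (Rmin d a). split; [apply Rmin_glb_lt; auto|].
      intros x [<-|Hx] Hx0; [apply Rmin_r|]. eapply Rle_trans; [apply Rmin_l|auto].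
    + exists d. split; auto. intros x [<-|Hx] Hx0; [lra|auto].
Qed.

Definition Tn (j : Z) (p : pt) : pt := (fst p + IZR j, snd p).

Lemma Tn_add j k p : Tn j (Tn k p) = Tn (j + k) p.
Proof. unfold Tn; simpl. rewrite plus_IZR. f_equal. ring. Qed.
Lemma Tn_0 p : Tn 0 p = p.
Proof. destruct p; unfold Tn; simpl. f_equal. ring. Qed.
Lemma T1_Tn p : T1 p = Tn 1 p.
Proof. reflexivity. Qed.

Lemma inv_Tn X : invariant X -> forall j p, X p <-> X (Tn j p).
Proof.
  intros HX j. induction j using Z.peano_ind; intros p.
  - rewrite Tn_0. tauto.
  - replace (Tn (Z.succ j) p) with (T1 (Tn j p)).
    + rewrite (IHj p). apply HX.
    + rewrite T1_Tn, Tn_add. f_equal. lia.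
  - rewrite (IHj p). replace (Tn j p) with (T1 (Tn (Z.pred j) p)).
    + symmetry. apply HX.
    + rewrite T1_Tn, Tn_add. f_equal. lia.
Qed.

Lemma near_Tn e j p q : near e (Tn j p) (Tn j q) <-> near e p q.
Proof. rewrite !near_iff. unfold Tn; simpl. split; intros; lra. Qed.

Lemma closure_Tn X j p : invariant X -> closure2 X p -> closure2 X (Tn j p).
Proof.
  intros HX Hp e He. destruct (Hp e He) as [q [Xq Nq]]. exists (Tn j q).
  split; [apply inv_Tn; auto|]. apply near_Tn; auto.
Qed.

Definition sat (X : pset) : pset := fun q => exists j, X (Tn j q).

Lemma sat_self X p : X p -> sat X p.
Proof. intros H. exists 0%Z. rewrite Tn_0; auto. Qed.

Lemma sat_inv X : invariant (sat X).
Proof.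
  intros p. rewrite T1_Tn. split; intros [j Hj].
  - exists (j - 1)%Z. rewrite Tn_add. replace (j - 1 + 1)%Z with j by lia. auto.
  - exists (j + 1)%Z. rewrite Tn_add in Hj. auto.
Qed.

Lemma sat_open X : open2 X -> open2 (sat X).
Proof.
  intros HX p [j Hj]. destruct (HX _ Hj) as [e [He H]]. exists e. split; auto.
  intros q Hq. exists j. apply H. apply near_Tn; auto.
Qed.

Lemma sat_openA X : open2 X -> openA (sat X).
Proof. intros; split; [apply sat_inv|apply sat_open; auto]. Qed.

Lemma sat_sub_inv A X : invariant A -> (forall p, X p -> A p) -> forall p, sat X p -> A p.
Proof. intros HA H p [j Hj]. apply (inv_Tn A HA j). auto. Qed.

Lemma finite_range (P : pset) q :
  (forall j, exists e, 0 < e /\ forall r, near e (Tn j q) r -> ~ P r) ->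
  forall n lo, exists e, 0 < e /\ forall j, (lo <= j <= lo + Z.of_nat n)%Z ->
    forall r, near e (Tn j q) r -> ~ P r.
Proof.
  intros H. induction n as [|n IH]; intros lo.
  - destruct (H lo) as [e [He H2]]. exists e. split; auto.
    intros j Hj. replace j with lo by lia. auto.
  - destruct (IH lo) as [e1 [He1 H1]]. destruct (H (lo + Z.of_nat (S n))%Z) as [e2 [He2 H2]].
    exists (Rmin e1 e2). split; [apply Rmin_glb_lt; auto|].
    intros j Hj r Hr. destruct (Z.eq_dec j (lo + Z.of_nat (S n))%Z) as [->|Hne].
    + apply H2. eapply near_mono; [apply Rmin_r|eauto].
    + apply (H1 j); [lia|]. eapply near_mono; [apply Rmin_l|eauto].
Qed.

Lemma sat_closed P a b : closed2 P -> (forall p, P p -> a <= fst p <= b) -> closed2 (sat P).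
Proof.
  intros HP Hb q Hq. apply NNPP; intro Hn.
  assert (Hj : forall j, exists e, 0 < e /\ forall r, near e (Tn j q) r -> ~ P r).
  { intros j. apply not_closure. intro Hc. apply Hn. exists j. apply HP; auto. }
  set (lo := (up (a - fst q - 1) - 1)%Z).
  set (n := Z.to_nat (up (b - fst q + 1) - lo)).
  destruct (finite_range P q Hj n lo) as [e [He H]].
  destruct (Hq (Rmin e 1)) as [r [[j Pj] Nr]]; [apply Rmin_glb_lt; lra|].
  assert (Hr1 : near 1 q r) by (eapply near_mono; [apply Rmin_r|eauto]).
  assert (Hre : near e q r) by (eapply near_mono; [apply Rmin_l|eauto]).
  apply (H j) with (Tn j r); [|apply near_Tn; auto|auto].
  specialize (Hb _ Pj). unfold Tn in Hb; simpl in Hb. apply near_iff in Hr1.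
  destruct (archimed (a - fst q - 1)) as [A1 A2].
  destruct (archimed (b - fst q + 1)) as [B1 B2].
  assert (L1 : (lo < j)%Z).
  { apply lt_IZR. unfold lo. rewrite minus_IZR. simpl. lra. }
  assert (L2 : (j < up (b - fst q + 1))%Z).
  { apply lt_IZR. lra. }
  unfold n. rewrite Z2Nat.id; lia.
Qed.

Definition seg (p q : pt) (t : R) : pt :=
  (fst p + t * (fst q - fst p), snd p + t * (snd q - snd p)).

Lemma seg0 p q : seg p q 0 = p.
Proof. destruct p; unfold seg; simpl; f_equal; ring. Qed.
Lemma seg1 p q : seg p q 1 = q.
Proof. destruct p, q; unfold seg; simpl; f_equal; ring. Qed.

Lemma seg_cont (W : pset) p q t : open2 W -> W (seg p q t) ->
  exists d, 0 < d /\ forall s, Rabs (s - t) < d -> W (seg p q s).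
Proof.
  intros HW Ht. destruct (HW _ Ht) as [e [He H]].
  set (K := Rabs (fst q - fst p) + Rabs (snd q - snd p) + 1).
  assert (HK : 0 < K) by (unfold K; pose proof (Rabs_pos (fst q - fst p)); pose proof (Rabs_pos (snd q - snd p)); lra).
  exists (e / K). split; [apply Rdiv_lt_0_compat; auto|].
  intros s Hs. apply H.
  assert (Hs2 : Rabs (s - t) * K < e).
  { apply (Rmult_lt_compat_r K) in Hs; auto. unfold Rdiv in Hs. rewrite Rmult_assoc, Rinv_l in Hs; lra. }
  pose proof (Rabs_pos (s - t)).
  pose proof (Rabs_pos (fst q - fst p)). pose proof (Rabs_pos (snd q - snd p)).
  unfold near, seg; simpl. split.
  - replace (fst p + t * (fst q - fst p) - (fst p + s * (fst q - fst p))) with (- ((s - t) * (fst q - fst p))) by ring.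
    rewrite Rabs_Ropp, Rabs_mult. unfold K in Hs2. nra.
  - replace (snd p + t * (snd q - snd p) - (snd p + s * (snd q - snd p))) with (- ((s - t) * (snd q - snd p))) by ring.
    rewrite Rabs_Ropp, Rabs_mult. unfold K in Hs2. nra.
Qed.

Lemma segment_lemma (U V : pset) p q :
  open2 U -> open2 V -> (forall t, 0 <= t <= 1 -> U (seg p q t) \/ V (seg p q t)) ->
  U p -> V q -> exists t, 0 <= t <= 1 /\ U (seg p q t) /\ V (seg p q t).
Proof.
  intros HU HV Hc Up Vq.
  set (E := fun t => 0 <= t <= 1 /\ forall s, 0 <= s <= t -> U (seg p q s)).
  assert (E0 : E 0).
  { split; [lra|]. intros s Hs. replace s with 0 by lra. rewrite seg0; auto. }
  assert (Eb : bound E). { exists 1. intros t [Ht _]. lra. }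
  destruct (completeness E Eb (ex_intro _ 0 E0)) as [m [Hm1 Hm2]].
  assert (Hm0 : 0 <= m) by (apply Hm1; auto).
  assert (Hm1' : m <= 1) by (apply Hm2; intros t [Ht _]; lra).
  assert (Fact : forall s, 0 <= s < m -> U (seg p q s)).
  { intros s Hs. destruct (classic (exists t, E t /\ s <= t)) as [[t [[_ Ht] Hst]]|Hn].
    - apply Ht. lra.
    - exfalso. assert (m <= s); [|lra]. apply Hm2. intros t Et.
      destruct (Rle_dec t s); auto. exfalso. apply Hn. exists t. split; auto; lra. }
  destruct (Hc m (conj Hm0 Hm1')) as [Um|Vm].
  - destruct (seg_cont U p q m HU Um) as [d [Hd Hdd]].
    destruct (Req_dec m 1) as [->|Hne].
    + exists 1. split; [lra|]. rewrite seg1. rewrite seg1 in Um. auto.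
    + exfalso. set (s' := Rmin 1 (m + d/2)).
      assert (E s').
      { split. { unfold s'. split; [apply Rmin_glb; lra|apply Rmin_l]. }
        intros s Hs. destruct (Rlt_dec s m); [apply Fact; lra|].
        apply Hdd. assert (s <= m + d/2) by (eapply Rle_trans; [apply Hs|apply Rmin_r]).
        rewrite Rabs_right; lra. }
      assert (s' <= m) by (apply Hm1; auto).
      unfold s' in H0. unfold Rmin in H0. destruct (Rle_dec 1 (m + d/2)); lra.
  - destruct (Req_dec m 0) as [->|Hne].
    + exists 0. split; [lra|]. rewrite seg0. split; auto. rewrite <- (seg0 p q). auto.
    + destruct (seg_cont V p q m HV Vm) as [d [Hd Hdd]].
      set (s := Rmax 0 (m - d/2)).
      assert (Hs1 : 0 <= s) by apply Rmax_l.
      assert (Hs2 : s < m) by (unfold s, Rmax; destruct (Rle_dec 0 (m - d/2)); lra).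
      assert (Hs3 : m - d/2 <= s) by apply Rmax_r.
      exists s. split; [lra|]. split; [apply Fact; lra|]. apply Hdd.
      rewrite Rabs_left; lra.
Qed.

Lemma conv_lt a b e t : a < e -> b < e -> 0 <= t <= 1 -> (1 - t) * a + t * b < e.
Proof.
  intros Ha Hb Ht.
  assert (0 <= (1 - t) * (e - a)) by (apply Rmult_le_pos; lra).
  assert (0 <= t * (e - b)) by (apply Rmult_le_pos; lra).
  destruct (Req_dec t 0) as [->|Hne]; [lra|].
  assert (0 < t * (e - b)) by (apply Rmult_lt_0_compat; lra). lra.
Qed.

Lemma ball_conn e c : connected_wrt open2 (near e c).
Proof.
  intros [U [V [HU [HV [Hc [[p [Bp Up]] [[q [Bq Vq]] Hd]]]]]]].
  assert (Hseg : forall t, 0 <= t <= 1 -> near e c (seg p q t)).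
  { intros t Ht. nrh. apply near_iff. unfold seg; simpl.
    pose proof (conv_lt (fst p - fst c) (fst q - fst c) e t).
    pose proof (conv_lt (fst c - fst p) (fst c - fst q) e t).
    pose proof (conv_lt (snd p - snd c) (snd q - snd c) e t).
    pose proof (conv_lt (snd c - snd p) (snd c - snd q) e t).
    repeat split; nra. }
  destruct (segment_lemma U V p q HU HV (fun t Ht => Hc _ (Hseg t Ht)) Up Vq) as [t [Ht [U1 V1]]].
  exact (Hd _ (Hseg t Ht) U1 V1).
Qed.

Lemma plane_conn U : open2 U -> open2 (fun p => ~ U p) -> (exists p, U p) -> (exists q, ~ U q) -> False.
Proof.
  intros HU HV [p Up] [q Vq].
  destruct (segment_lemma U (fun p => ~ U p) p q HU HV) as [t [_ [A B]]]; auto.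
  intros t _. apply classic.
Qed.

Lemma conn_sub (op1 op2 : pset -> Prop) X : (forall U, op1 U -> op2 U) -> connected_wrt op2 X -> connected_wrt op1 X.
Proof.
  intros H HX [U [V [HU [HV R]]]]. apply HX. exists U, V. auto.
Qed.

Lemma openA_open2 U : openA U -> open2 U.
Proof. intros [_ H]; auto. Qed.

Lemma conn_side (op : pset -> Prop) X U V : connected_wrt op X -> op U -> op V ->
  (forall p, X p -> U p \/ V p) -> (forall p, X p -> U p -> V p -> False) ->
  (forall p, X p -> U p) \/ (forall p, X p -> V p).
Proof.
  intros HX HU HV Hc Hd.
  destruct (classic (exists p, X p /\ U p)) as [HU1|HU1];
  destruct (classic (exists p, X p /\ V p)) as [HV1|HV1].
  - exfalso. apply HX. exists U, V. auto 10.
  - left. intros p Xp. destruct (Hc p Xp); auto. exfalso; apply HV1; eauto.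
  - right. intros p Xp. destruct (Hc p Xp); auto. exfalso; apply HU1; eauto.
  - left. intros p Xp. destruct (Hc p Xp); [auto|exfalso; apply HV1; eauto].
Qed.

Lemma conn_family (op : pset -> Prop) (Z : pset) q :
  (forall r, Z r -> exists D, connected_wrt op D /\ (forall x, D x -> Z x) /\ D q /\ D r) ->
  connected_wrt op Z.
Proof.
  intros H [U [V [HU [HV [Hc [[a [Za Ua]] [[b [Zb Vb]] Hd]]]]]]].
  destruct (H a Za) as [Da [Ca [Sa [Dqa Daa]]]].
  destruct (H b Zb) as [Db [Cb [Sb [Dqb Dbb]]]].
  destruct (Hc q (Sa q Dqa)) as [Uq|Vq].
  - apply Cb. exists U, V. refine (conj HU (conj HV (conj _ (conj _ (conj _ _))))).
    + intros p Dp. apply Hc; auto.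
    + exists q; auto.
    + exists b; auto.
    + intros p Dp. apply Hd; auto.
  - apply Ca. exists U, V. refine (conj HU (conj HV (conj _ (conj _ (conj _ _))))).
    + intros p Dp. apply Hc; auto.
    + exists a; auto.
    + exists q; auto.
    + intros p Dp. apply Hd; auto.
Qed.

Lemma conn_closure (op : pset -> Prop) X : (forall U, op U -> open2 U) ->
  connected_wrt op X -> connected_wrt op (closure2 X).
Proof.
  intros Hop HX [U [V [HU [HV [Hc [[a [Ca Ua]] [[b [Cb Vb]] Hd]]]]]]].
  apply HX. exists U, V. refine (conj HU (conj HV (conj _ (conj _ (conj _ _))))).
  - intros p Xp. apply Hc, closure_sub; auto.
  - destruct (Hop U HU a Ua) as [e [He H]]. destruct (Ca e He) as [q [Xq Nq]]. exists q; auto.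
  - destruct (Hop V HV b Vb) as [e [He H]]. destruct (Cb e He) as [q [Xq Nq]]. exists q; auto.
  - intros p Xp. apply Hd, closure_sub; auto.
Qed.

Lemma single_conn (op : pset -> Prop) q : connected_wrt op (fun x => x = q).
Proof.
  intros [U [V [_ [_ [_ [[a [-> Ua]] [[b [-> Vb]] Hd]]]]]]]. eapply Hd; eauto.
Qed.

Lemma sat_conn D : connected_wrt openA D -> connected_wrt openA (sat D).
Proof.
  intros HD [U [V [HU [HV [Hc [[a [Sa Ua]] [[b [Sb Vb]] Hd]]]]]]].
  assert (Hs : forall p, D p -> sat D p) by (intros; apply sat_self; auto).
  destruct (conn_side openA D U V HD HU HV) as [HDU|HDV].
  - intros p Dp; auto.
  - intros p Dp; apply Hd; auto.
  - destruct Sb as [j Dj]. apply (Hd (Tn j b)).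
    + apply sat_self; auto.
    + auto.
    + apply (inv_Tn V (proj1 HV)); auto.
  - destruct Sa as [j Dj]. apply (Hd (Tn j a)).
    + apply sat_self; auto.
    + apply (inv_Tn U (proj1 HU)); auto.
    + auto.
Qed.

Lemma single_closed p : closed2 (fun x => x = p).
Proof.
  intros x Hx. destruct x as [x1 x2], p as [p1 p2].
  assert (H1 : forall e, 0 < e -> Rabs (x1 - p1) < e /\ Rabs (x2 - p2) < e).
  { intros e He. destruct (Hx e He) as [q [-> Nq]]. exact Nq. }
  destruct (Req_dec x1 p1) as [E1|E1]; destruct (Req_dec x2 p2) as [E2|E2]; subst; auto; exfalso.
  - destruct (H1 (Rabs (x2 - p2))) as [_ H]; [apply Rabs_pos_lt; lra|lra].
  - destruct (H1 (Rabs (x1 - p1))) as [H _]; [apply Rabs_pos_lt; lra|lra].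
  - destruct (H1 (Rabs (x1 - p1))) as [H _]; [apply Rabs_pos_lt; lra|lra].
Qed.

Definition flat_some {I : Type} (l : list (option I)) : list I :=
  flat_map (fun o => match o with Some i => i :: nil | None => nil end) l.

Lemma in_flat_some {I : Type} (l : list (option I)) i : In (Some i) l -> In i (flat_some l).
Proof. intros H. unfold flat_some. apply in_flat_map. exists (Some i). simpl; auto. Qed.

Lemma A_closed A : invariant A -> compactA A -> closed2 A.
Proof.
  intros HA Hc p Hp. apply NNPP; intro Hn.
  set (O := sat (fun x => x = p)).
  assert (HO : closed2 O) by (apply (sat_closed _ (fst p) (fst p)); [apply single_closed|intros x ->; lra]).
  set (G0 := fun (d : R) (q : pt) => 0 < d /\ exists e, 0 < e /\ forall r, near e q r -> forall j, ~ near d r (Tn j p)).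
  assert (HG0 : forall d, open2 (G0 d)).
  { intros d q [Hd [e [He H]]]. exists (e/2). split; [lra|]. intros q' Hq'. split; auto.
    exists (e/2). split; [lra|]. intros r Hr. apply H. replace e with (e/2+e/2) by field. eapply near_trans; eauto. }
  destruct (Hc R (fun d => sat (G0 d))) as [l Hl].
  - intros d. apply sat_openA; auto.
  - intros q Aq. assert (~ O q).
    { intros [j Hj]. apply Hn. rewrite <- Hj. apply (proj1 (inv_Tn A HA j q)). auto. }
    destruct (not_closure O q (fun H' => H (HO q H'))) as [e0 [He0 H0]].
    exists (e0/2). apply sat_self. split; [lra|]. exists (e0/2). split; [lra|].
    intros r Hr j Hj. apply (H0 (Tn j p)).
    + replace e0 with (e0/2+e0/2) by field. eapply near_trans; eauto.
    + exists (- j)%Z. rewrite Tn_add. replace (-j + j)%Z with 0%Z by lia. apply Tn_0.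
  - destruct (min_list l) as [d [Hd Hdl]].
    destruct (Hp d Hd) as [r [Ar Nr]].
    destruct (Hl r Ar) as [d' [Hin [j [Hd' [e [He H]]]]]].
    apply (H (Tn j r) (near_refl _ _ He) j). apply near_Tn. apply near_sym.
    eapply near_mono; [apply Hdl; auto|exact Nr].
Qed.

Lemma piece_compact A P c : invariant A -> compactA A -> closed2 P ->
  (forall p, P p -> c < fst p < c + 3/4) -> compact2 (fun p => A p /\ P p).
Proof.
  intros HA Hc HP Hb I W HW Hcov.
  set (G := fun o : option I => match o with
       | Some i => sat (fun x => W i x /\ c < fst x < c + 3/4)
       | None => fun q => ~ sat P q end).
  destruct (Hc (option I) G) as [l Hl].
  - intros [i|]; simpl.
    + apply sat_openA. apply open_and; auto.
      intros p Hp. exists (Rmin (fst p - c) (c + 3/4 - fst p)).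
      split; [apply Rmin_glb_lt; lra|]. intros q Hq.
      pose proof (Rmin_l (fst p - c) (c + 3/4 - fst p)). pose proof (Rmin_r (fst p - c) (c + 3/4 - fst p)). nr.
    + split.
      * intros q. pose proof (sat_inv P q). tauto.
      * apply closed_open_compl. apply (sat_closed P c (c+3/4)); auto. intros p Pp. specialize (Hb p Pp). lra.
  - intros q Aq. destruct (classic (sat P q)) as [[j Pj]|Hn].
    + destruct (Hcov (Tn j q)) as [i Hi]. { split; auto. apply (proj1 (inv_Tn A HA j q)); auto. }
      exists (Some i). simpl. exists j. split; auto.
    + exists None. simpl. auto.
  - exists (flat_some l). intros x [Ax Px].
    destruct (Hl x Ax) as [[i|] [Hin Hx]]; simpl in Hx.
    + destruct Hx as [j [Wj Sj]]. pose proof (Hb x Px). unfold Tn in Sj; simpl in Sj.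
      assert (j = 0%Z).
      { assert (IZR (-1) < IZR j) by (simpl; lra). assert (IZR j < IZR 1) by (simpl; lra).
        apply lt_IZR in H0. apply lt_IZR in H1. lia. }
      subst j. rewrite Tn_0 in Wj. exists i. split; auto. apply in_flat_some; auto.
    + exfalso. apply Hx. apply sat_self; auto.
Qed.

Lemma compact2_union X X1 X2 : compact2 X1 -> compact2 X2 ->
  (forall p, X p -> X1 p \/ X2 p) -> (forall p, X1 p -> X p) -> (forall p, X2 p -> X p) -> compact2 X.
Proof.
  intros H1 H2 H H1s H2s I U HU Hc.
  destruct (H1 I U HU) as [l1 Hl1]; [intros; apply Hc; auto|].
  destruct (H2 I U HU) as [l2 Hl2]; [intros; apply Hc; auto|].
  exists (l1 ++ l2). intros p Xp. destruct (H p Xp) as [Hp|Hp].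
  - destruct (Hl1 p Hp) as [i [Hi Ui]]. exists i. split; auto. apply in_or_app; auto.
  - destruct (Hl2 p Hp) as [i [Hi Ui]]. exists i. split; auto. apply in_or_app; auto.
Qed.

Lemma closed_le P c : closed2 P -> closed2 (fun p => P p /\ fst p <= c).
Proof.
  intros HP. apply closed_and; auto. intros p Hp. apply Rnot_lt_le. intro H.
  destruct (Hp (fst p - c)) as [q [Hq Nq]]; [lra|]. nr.
Qed.
Lemma closed_ge P c : closed2 P -> closed2 (fun p => P p /\ c <= fst p).
Proof.
  intros HP. apply closed_and; auto. intros p Hp. apply Rnot_lt_le. intro H.
  destruct (Hp (c - fst p)) as [q [Hq Nq]]; [lra|]. nr.
Qed.

Lemma strip_compact A : invariant A -> compactA A ->
  forall n P a, closed2 P -> (forall p, P p -> a <= fst p <= a + INR n / 2) -> compact2 (fun p => A p /\ P p).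
Proof.
  intros HA Hc n. induction n as [|n IH]; intros P a HP Hb.
  - apply (piece_compact A P (a - 1/4)); auto. intros p Pp. specialize (Hb p Pp). simpl in Hb. lra.
  - apply (compact2_union _ (fun p => A p /\ (P p /\ fst p <= a + 1/2)) (fun p => A p /\ (P p /\ a + 1/2 <= fst p))).
    + apply (piece_compact A _ (a - 1/8)); auto. apply closed_le; auto.
      intros p [Pp Hp]. specialize (Hb p Pp). lra.
    + apply (IH _ (a + 1/2)). apply closed_ge; auto.
      intros p [Pp Hp]. specialize (Hb p Pp). rewrite S_INR in Hb. lra.
    + intros p [Ap Pp]. destruct (Rle_dec (fst p) (a + 1/2)); [left|right]; repeat split; auto; lra.
    + tauto.
    + tauto.
Qed.

Lemma bounded_compact A P a b : invariant A -> compactA A -> closed2 P ->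
  (forall p, P p -> a <= fst p <= b) -> compact2 (fun p => A p /\ P p).
Proof.
  intros HA Hc HP Hb.
  destruct (archimed (2 * (b - a))) as [H1 H2].
  apply (strip_compact A HA Hc (Z.to_nat (up (2 * (b - a)))) P a HP).
  intros p Pp. specialize (Hb p Pp). split; [lra|].
  assert (0 <= up (2 * (b - a)))%Z.
  { apply le_IZR. simpl. lra. }
  rewrite INR_IZR_INZ, Z2Nat.id; auto. lra.
Qed.

Lemma compact2_closed_sub X G : compact2 X -> closed2 G -> (forall p, G p -> X p) -> compact2 G.
Proof.
  intros HX HG Hs I U HU Hc.
  set (F := fun o : option I => match o with Some i => U i | None => fun p => ~ G p end).
  destruct (HX (option I) F) as [l Hl].
  - intros [i|]; simpl; auto. apply closed_open_compl; auto.
  - intros p Xp. destruct (classic (G p)) as [Gp|Gp].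
    + destruct (Hc p Gp) as [i Hi]. exists (Some i); auto.
    + exists None; auto.
  - exists (flat_some l). intros p Gp. destruct (Hl p (Hs p Gp)) as [[i|] [Hin Hi]]; simpl in Hi.
    + exists i. split; auto. apply in_flat_some; auto.
    + contradiction.
Qed.

Lemma sep_dist K Z : compact2 K -> closed2 Z -> (forall p, K p -> ~ Z p) ->
  exists eps, 0 < eps /\ forall s p, K s -> near (2 * eps) s p -> ~ Z p.
Proof.
  intros HK HZ Hd.
  set (U := fun (i : pt * R) p => (K (fst i) /\ 0 < snd i /\ forall q, near (snd i) (fst i) q -> ~ Z q) /\ near (snd i / 2) (fst i) p).
  destruct (HK (pt * R)%type U) as [l Hl].
  - intros i. apply open_cond_ball.
  - intros p Kp. destruct (not_closure Z p (fun H => Hd p Kp (HZ p H))) as [r [Hr H]].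
    exists (p, r). unfold U; simpl. split; [split; [auto|split; auto]|apply near_refl; lra].
  - destruct (min_list (map snd l)) as [d [Hdp Hdl]].
    exists (d/4). split; [lra|]. intros s p Ks Np.
    destruct (Hl s Ks) as [[s' r] [Hin [[_ [Hr Hn]] Ns]]]; simpl in *.
    assert (d <= r) by (apply Hdl; auto; apply in_map_iff; exists (s', r); auto).
    apply Hn. replace r with (r/2 + r/2) by field.
    eapply near_trans; [exact Ns|]. eapply near_mono; [|exact Np]. lra.
Qed.

Lemma normal2 K1 K2 : closed2 K1 -> closed2 K2 -> (forall p, K1 p -> K2 p -> False) ->
  exists U1 V1, open2 U1 /\ open2 V1 /\ (forall p, K1 p -> U1 p) /\ (forall p, K2 p -> V1 p) /\
    (forall p, U1 p -> V1 p -> False).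
Proof.
  intros H1 H2 Hd.
  set (Bd := fun (Ka Kb : pset) (i : pt * R) p => (Ka (fst i) /\ 0 < snd i /\ forall q, near (snd i) (fst i) q -> ~ Kb q) /\ near (snd i / 2) (fst i) p).
  exists (fun p => exists i, Bd K1 K2 i p), (fun p => exists i, Bd K2 K1 i p).
  split; [apply open_ex; intros; apply open_cond_ball|].
  split; [apply open_ex; intros; apply open_cond_ball|].
  split; [|split].
  - intros p Kp. destruct (not_closure K2 p (fun H => Hd p Kp (H2 p H))) as [r [Hr H]].
    exists (p, r). unfold Bd; simpl. split; [split; [auto|split; auto]|apply near_refl; lra].
  - intros p Kp. destruct (not_closure K1 p (fun H => Hd p (H1 p H) Kp)) as [r [Hr H]].
    exists (p, r). unfold Bd; simpl. split; [split; [auto|split; auto]|apply near_refl; lra].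
  - intros p [[a r] [[Ka [Hr Ha]] Na]] [[b s] [[Kb [Hs Hb]] Nb]]; simpl in *.
    destruct (Rle_dec r s).
    + apply (Hb a); auto. nr.
    + apply (Ha b); auto. nr.
Qed.

Definition sepr (X S U V : pset) : Prop :=
  open2 U /\ open2 V /\ (forall p, X p -> U p \/ V p) /\ (forall p, X p -> U p -> V p -> False) /\
  (forall p, S p -> U p).

Section SBsec.
Variables X S : pset.
Hypothesis HXc : closed2 X.
Hypothesis HXk : compact2 X.
Hypothesis HSconn : connected_wrt open2 S.
Hypothesis HSX : forall p, S p -> X p.
Hypothesis HSmax : forall D, (forall p, S p -> D p) -> (forall p, D p -> X p) -> connected_wrt open2 D -> forall p, D p -> S p.

Definition Qs : pset := fun p => X p /\ forall U V, sepr X S U V -> U p.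

Lemma Qs_closed : closed2 Qs.
Proof.
  intros p Hp. assert (Xp : X p) by (apply HXc; eapply closure_mono; [|exact Hp]; intros q [H _]; auto).
  split; auto. intros U V [HU [HV [Hc [Hd HS]]]].
  destruct (Hc p Xp) as [Up|Vp]; auto. exfalso.
  destruct (HV p Vp) as [e [He H]]. destruct (Hp e He) as [q [[Xq Hq] Nq]].
  apply (Hd q Xq); [apply (Hq U V); exact (conj HU (conj HV (conj Hc (conj Hd HS))))|apply H; auto].
Qed.

Lemma S_Qs p : S p -> Qs p.
Proof. intros Sp. split; auto. intros U V [_ [_ [_ [_ H]]]]. auto. Qed.

Lemma sep_of_closed G : closed2 G -> (forall p, G p -> X p) -> (forall p, G p -> ~ Qs p) ->
  exists U V, sepr X S U V /\ forall p, G p -> V p.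
Proof.
  intros HG HGX HGQ.
  set (I := {uv : pset * pset | sepr X S (fst uv) (snd uv)}).
  set (Vf := fun i : I => snd (proj1_sig i)).
  set (Uf := fun i : I => fst (proj1_sig i)).
  assert (HGk : compact2 G) by (apply (compact2_closed_sub X); auto).
  destruct (HGk I Vf) as [l Hl].
  - intros i. unfold Vf. destruct (proj2_sig i) as [HU [HV _]]. exact HV.
  - intros g Gg. assert (~ Qs g) by auto.
    assert (~ forall U V, sepr X S U V -> U g) by (intro H'; apply H; split; auto).
    apply not_all_ex_not in H0. destruct H0 as [U H0]. apply not_all_ex_not in H0. destruct H0 as [V H0].
    apply imply_to_and in H0. destruct H0 as [Hs Hn].
    exists (exist _ (U, V) Hs). unfold Vf; simpl. destruct Hs as [_ [_ [Hc _]]].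
    destruct (Hc g (HGX g Gg)); tauto.
  - exists (fun p => forall i, In i l -> Uf i p), (fun p => exists i, In i l /\ Vf i p).
    split; [split; [|split; [|split; [|split]]]|].
    + apply open_list_inter. intros i. unfold Uf. destruct (proj2_sig i) as [HU _]. exact HU.
    + intros p [i [Hi Vi]]. destruct (proj2_sig i) as [HU [HV _]]. unfold Vf in Vi.
      destruct (HV p Vi) as [e [He H]]. exists e. split; auto. intros q Hq.
      exists i. split; [exact Hi|]. unfold Vf. auto.
    + intros p Xp. destruct (classic (forall i, In i l -> Uf i p)) as [H|H]; [left; auto|right].
      apply not_all_ex_not in H. destruct H as [i H]. apply imply_to_and in H. destruct H as [Hi Hn].
      exists i. split; auto. destruct (proj2_sig i) as [_ [_ [Hc _]]]. unfold Uf, Vf in *.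
      destruct (Hc p Xp); tauto.
    + intros p Xp HU [i [Hi Vi]]. specialize (HU i Hi). destruct (proj2_sig i) as [_ [_ [_ [Hd _]]]].
      unfold Uf, Vf in *. eauto.
    + intros p Sp i _. destruct (proj2_sig i) as [_ [_ [_ [_ HS]]]]. unfold Uf. auto.
    + intros p Gp. destruct (Hl p Gp) as [i [Hi Vi]]. eauto.
Qed.

Lemma Qs_aux U0 V0 q : open2 U0 -> open2 V0 -> (forall p, Qs p -> U0 p \/ V0 p) ->
  (forall p, Qs p -> U0 p -> V0 p -> False) -> (forall p, S p -> U0 p) -> Qs q -> V0 q -> False.
Proof.
  intros HU0 HV0 Hc Hd HSU Qq Vq.
  set (K1 := fun p => Qs p /\ ~ V0 p). set (K2 := fun p => Qs p /\ ~ U0 p).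
  destruct (normal2 K1 K2) as [U1 [V1 [HU1 [HV1 [HK1 [HK2 Hd1]]]]]].
  - apply closed_inter_open_compl; auto. apply Qs_closed.
  - apply closed_inter_open_compl; auto. apply Qs_closed.
  - intros p [Qp Vp] [_ Up]. destruct (Hc p Qp); auto.
  - set (G := fun p => (X p /\ ~ U1 p) /\ ~ V1 p).
    destruct (sep_of_closed G) as [U [V [[HU [HV [Hc2 [Hd2 HS2]]]] HGV]]].
    + repeat apply closed_inter_open_compl; auto.
    + intros p [[Xp _] _]; auto.
    + intros p [[Xp HnU] HnV] Qp. destruct (Hc p Qp) as [Up|Vp].
      * apply HnU, HK1. split; auto. intro. eauto.
      * apply HnV, HK2. split; auto. intro. eauto.
    + assert (Hs : sepr X S (fun p => U p /\ U1 p) (fun p => V p \/ V1 p)).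
      { split; [apply open_and; auto|]. split; [apply open_or; auto|].
        split; [|split].
        - intros p Xp. destruct (classic (V p)); [right; left; auto|].
          destruct (Hc2 p Xp) as [Up|]; [|contradiction].
          destruct (classic (U1 p)); [left; auto|]. destruct (classic (V1 p)); [right; right; auto|].
          exfalso. apply H. apply HGV. repeat split; auto.
        - intros p Xp [Up U1p] [Vp|V1p]; eauto.
        - intros p Sp. split; auto. apply HK1. split; [apply S_Qs; auto|]. intro.
          apply (Hd p); auto. apply S_Qs; auto. }
      destruct Qq as [Xq HQq]. pose proof (HQq _ _ Hs) as [_ U1q].
      apply (Hd1 q); auto. apply HK2. split; [split; auto|]. intro. apply (Hd q); auto. split; auto.
Qed.

Lemma Qs_conn : connected_wrt open2 Qs.
Proof.
  intros [U0 [V0 [HU0 [HV0 [Hc [[q1 [Qq1 Uq1]] [[q2 [Qq2 Vq2]] Hd]]]]]]].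
  destruct (conn_side open2 S U0 V0 HSconn HU0 HV0) as [HSU|HSV].
  - intros p Sp. apply Hc, S_Qs; auto.
  - intros p Sp. apply Hd, S_Qs; auto.
  - apply (Qs_aux U0 V0 q2); auto.
  - apply (Qs_aux V0 U0 q1); auto.
    + intros p Qp. destruct (Hc p Qp); auto.
    + intros p Qp H1 H2. eapply Hd; eauto.
Qed.

Lemma SB F : closed2 F -> (forall p, F p -> X p) -> (forall p, F p -> ~ S p) ->
  exists U V, sepr X S U V /\ forall p, F p -> V p.
Proof.
  intros HF HFX HFS. apply sep_of_closed; auto.
  intros p Fp Qp. apply (HFS p Fp). apply (HSmax Qs); auto.
  - apply S_Qs.
  - intros q [Xq _]; auto.
  - apply Qs_conn.
Qed.
End SBsec.

Lemma comp_exists A q : invariant A -> ~ A q -> exists C, componentA C (complement A) /\ C q.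
Proof.
  intros HA Aq.
  set (C := fun r => exists D, connected_wrt openA D /\ (forall x, D x -> ~ A x) /\ D q /\ D r).
  assert (Hsat : forall D, connected_wrt openA D -> (forall x, D x -> ~ A x) -> forall x, sat D x -> ~ A x).
  { intros D _ HD x [j Hj] Ax. apply (HD _ Hj). apply (proj1 (inv_Tn A HA j x)); auto. }
  exists C. split.
  - split.
    + intros r. split.
      * intros [D [HD [HDA [Dq Dr]]]]. exists (sat D). split; [apply sat_conn; auto|].
        split; [apply Hsat; auto|]. split; [apply sat_self; auto|].
        exists (-1)%Z. rewrite T1_Tn, Tn_add. replace (-1 + 1)%Z with 0%Z by lia. rewrite Tn_0; auto.
      * intros [D [HD [HDA [Dq Dr]]]]. exists (sat D). split; [apply sat_conn; auto|].
        split; [apply Hsat; auto|]. split; [apply sat_self; auto|].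
        exists 1%Z. rewrite <- T1_Tn. auto.
    + split; [|split; [|split]].
      * exists q. exists (fun x => x = q). split; [apply single_conn|]. split; [intros x ->; auto|]. auto.
      * intros p [D [_ [HDA [_ Dp]]]]. apply HDA; auto.
      * apply (conn_family openA C q). intros r Cr. destruct Cr as [D [HD [HDA [Dq Dr]]]].
        exists D. split; auto. split; auto. intros x Dx. exists D. auto.
      * intros D HCD HDY HD p Dp. exists D. split; auto. split; [intros x Dx; apply HDY; auto|].
        split; auto. apply HCD. exists (fun x => x = q). split; [apply single_conn|]. split; [intros x ->; auto|]. auto.
  - exists (fun x => x = q). split; [apply single_conn|]. split; [intros x ->; auto|]. auto.
Qed.

Lemma thin_cover A Up Um : invariant A -> thin A ->
  (forall C, componentA C (complement A) -> (forall p, C p <-> Up p) \/ (forall p, C p <-> Um p)) ->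
  forall p, A p -> closure2 Up p \/ closure2 Um p.
Proof.
  intros HA Hth Hall p Ap. apply NNPP; intro Hn. apply not_or_and in Hn. destruct Hn as [H1 H2].
  destruct (not_closure _ _ H1) as [e1 [He1 B1]]. destruct (not_closure _ _ H2) as [e2 [He2 B2]].
  set (e := Rmin e1 e2).
  assert (He : 0 < e) by (apply Rmin_glb_lt; auto).
  assert (Hball : forall q, near e p q -> A q).
  { intros q Hq. apply NNPP; intro Aq. destruct (comp_exists A q HA Aq) as [C [HC Cq]].
    destruct (Hall C HC) as [H|H]; apply H in Cq.
    - apply (B1 q); auto. eapply near_mono; [apply Rmin_l|eauto].
    - apply (B2 q); auto. eapply near_mono; [apply Rmin_r|eauto]. }
  apply (Hth (sat (near e p)) (sat_openA _ (open_ball e p)) (sat_sub_inv A _ HA Hball) p).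
  apply sat_self, near_refl; auto.
Qed.

Lemma A_meets_clW A W : invariant A -> closed2 A -> (exists a, A a) -> componentA W (complement A) -> (exists w, W w) ->
  exists a, A a /\ closure2 W a.
Proof.
  intros HAi HA [a0 Aa0] [HWi [_ [HWA [HWc HWmax]]]] [w Ww].
  apply NNPP; intro Hn.
  assert (H : forall a, A a -> ~ closure2 W a) by (intros a Aa Hc; apply Hn; eauto).
  assert (HWo : open2 W).
  { intros p Wp. assert (~ A p) by (apply HWA; auto).
    destruct (not_closure A p (fun Hc => H0 (HA p Hc))) as [e [He Hb]].
    exists e. split; auto. intros q Hq.
    refine (HWmax (fun x => W x \/ near e p x) _ _ _ q (or_intror Hq)).
    - intros; left; auto.
    - intros x [Wx|Nx]; [apply HWA; auto|apply Hb; auto].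
    - refine (conn_family openA _ p _). intros r [Wr|Nr].
      + exists W. refine (conj HWc (conj _ (conj Wp Wr))). intros x Wx; left; exact Wx.
      + exists (near e p). split; [apply (conn_sub openA open2); [apply openA_open2|apply ball_conn]|].
        split; [auto|]. split; [apply near_refl|]; auto. }
  assert (Hcl : forall p, closure2 W p -> W p).
  { intros p0 Hp0. refine (HWmax (closure2 W) _ _ _ p0 Hp0).
    - intros; apply closure_sub; auto.
    - intros p Cp Ap. apply (H p Ap Cp).
    - apply conn_closure; auto. apply openA_open2. }
  apply (plane_conn W HWo).
  - apply closed_open_compl. exact Hcl.
  - exists w; auto.
  - exists a0. intro. apply (HWA a0); auto.
Qed.

Lemma core (A S W Y : pset) :
  invariant A -> compactA A -> connectedA A -> closed2 A ->
  invariant W -> (exists a, A a /\ closure2 W a) ->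
  (forall p, A p -> ~ closure2 W p -> Y p) ->
  (exists s, S s) -> connected_wrt open2 S ->
  (forall D, (forall p, S p -> D p) -> (forall p, D p -> Y p) -> connected_wrt open2 D -> forall p, D p -> S p) ->
  closed2 S -> (forall p, S p -> A p) -> h_finite S -> (forall p, S p -> ~ closure2 W p) -> False.
Proof.
  intros HAi HAc HAconn HAcl HWi [a [Aa Wa]] HY [s0 Ss0] HSconn HSmax HScl HSA [M HM] HSW.
  assert (HSb : forall p, S p -> fst s0 - M <= fst p <= fst s0 + M).
  { intros p Sp. pose proof (HM p s0 Sp Ss0). pose proof (HM s0 p Ss0 Sp). lra. }
  set (K := fun p => A p /\ S p).
  assert (HK : compact2 K) by (apply (bounded_compact A S (fst s0 - M) (fst s0 + M)); auto).
  destruct (sep_dist K (closure2 W) HK (closure_closed W)) as [eps [Heps Hsep]].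
  { intros p [_ Sp]. auto. }
  set (N := fun p => exists s, K s /\ near eps s p).
  assert (HNo : open2 N).
  { intros p [s [Ks Ns]]. destruct (open_ball eps s p Ns) as [e [He H]]. exists e. split; auto.
    intros q Hq. exists s. split; auto. }
  assert (HclN : forall p, closure2 N p -> exists s, K s /\ near (2 * eps) s p).
  { intros p Hp. destruct (Hp eps Heps) as [q [[s [Ks Nq]] Npq]]. exists s. split; auto.
    replace (2 * eps) with (eps + eps) by ring. eapply near_trans; [exact Nq|]. apply near_sym; auto. }
  assert (HclNW : forall p, closure2 N p -> ~ closure2 W p).
  { intros p Hp. destruct (HclN p Hp) as [s [Ks Ns]]. eapply Hsep; eauto. }
  assert (HclNb : forall p, closure2 N p -> fst s0 - M - 2 * eps - 1 <= fst p <= fst s0 + M + 2 * eps + 1).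
  { intros p Hp. destruct (HclN p Hp) as [s [[_ Ss] Ns]]. specialize (HSb s Ss). nrh. simpl in *. lra. }
  set (X := fun p => A p /\ closure2 N p).
  assert (HXc : closed2 X) by (apply closed_and; auto; apply closure_closed).
  assert (HXk : compact2 X) by (apply (bounded_compact A (closure2 N) _ _ HAi HAc (closure_closed N) HclNb)).
  assert (HSN : forall p, S p -> N p).
  { intros p Sp. exists p. split; [split; auto|apply near_refl; auto]. }
  assert (HSX : forall p, S p -> X p).
  { intros p Sp. split; auto. apply closure_sub; auto. }
  set (F := fun p => X p /\ ~ N p).
  destruct (SB X S HXc HXk HSconn HSX) with (F := F) as [U [V [[HU [HV [Hc [Hd HSU]]]] HFV]]].
  - intros D H1 H2 H3. apply HSmax; auto. intros p Dp. destruct (H2 p Dp) as [Ap Np]. apply HY; auto.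
  - apply closed_inter_open_compl; auto.
  - intros p [Xp _]; auto.
  - intros p [_ Np] Sp. apply Np, HSN; auto.
  - set (O := fun p => U p /\ N p).
    set (Kk := fun p => A p /\ O p).
    assert (HKk : closed2 Kk).
    { intros p Hp. assert (Xp : X p).
      { apply HXc. eapply closure_mono; [|exact Hp]. intros q [Aq [_ Nq]]. split; auto. apply closure_sub; auto. }
      assert (nV : ~ V p).
      { intro Vp. destruct (HV p Vp) as [e [He H]]. destruct (Hp e He) as [q [[Aq [Uq Nq]] Nq']].
        apply (Hd q); auto. split; auto. apply closure_sub; auto. }
      destruct (Hc p Xp) as [Up|]; [|contradiction].
      split; [apply Xp|]. split; auto. apply NNPP; intro Np. apply nV, HFV. split; auto. }
    assert (HK' : closed2 (sat Kk)).
    { apply (sat_closed Kk (fst s0 - M - 2 * eps - 1) (fst s0 + M + 2 * eps + 1) HKk). intros p [Ap [_ Np]]. apply HclNb, closure_sub; auto. }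
    apply HAconn. exists (sat O), (fun p => ~ sat Kk p).
    split; [apply sat_openA, open_and; auto|].
    split; [split; [intros p; pose proof (sat_inv Kk p); tauto|apply closed_open_compl; auto]|].
    split; [|split; [|split]].
    + intros p Ap. destruct (classic (sat Kk p)) as [[j [_ Oj]]|]; [left; exists j; auto|right; auto].
    + exists s0. split; [apply HSA; auto|]. apply sat_self. split; [apply HSU; auto|apply HSN; auto].
    + exists a. split; auto. intros [j [_ [_ Nj]]].
      apply (HclNW (Tn j a)); [apply closure_sub; auto|]. apply closure_Tn; auto.
    + intros p Ap [j Oj] Hn. apply Hn. exists j. split; auto. apply (proj1 (inv_Tn A HAi j p)); auto.
Qed.

Theorem mainTheorem15 (A Up Um S : pset) :
  essential_annular A Up Um -> thin A ->
  spike A Up Um S -> h_finite S ->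
  exists p, closure2 S p /\ CAhat Up Um p.
Proof.
  intros [[HAi [HAne [HAc HAconn]]] [HUp [HUm [_ [Hall [Hua Hub]]]]]] Hthin [HSne [HSsub [HSconn HSmax]]] Hh.
  apply NNPP; intro Hn.
  assert (HAcl : closed2 A) by (apply A_closed; auto).
  assert (HSA : forall p, S p -> A p) by (intros p Sp; apply (HSsub p Sp)).
  assert (HScl : closed2 S).
  { intros p Hp. refine (HSmax (closure2 S) _ _ _ p Hp).
    - intros; apply closure_sub; auto.
    - intros q Hq. split.
      + apply HAcl. eapply closure_mono; [|exact Hq]. auto.
      + intro HC. apply Hn. exists q. auto.
    - apply conn_closure; auto. }
  assert (Hcov : forall p, A p -> closure2 Up p \/ closure2 Um p) by (apply thin_cover; auto).
  assert (Hside : (forall p, S p -> ~ closure2 Um p) \/ (forall p, S p -> ~ closure2 Up p)).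
  { destruct (conn_side open2 S (fun p => ~ closure2 Um p) (fun p => ~ closure2 Up p) HSconn) as [H|H].
    - apply closed_open_compl, closure_closed.
    - apply closed_open_compl, closure_closed.
    - intros p Sp. destruct (HSsub p Sp) as [_ HC]. unfold CAhat in HC. tauto.
    - intros p Sp H1 H2. destruct (Hcov p (HSA p Sp)); auto.
    - left; auto.
    - right; auto. }
  destruct Hside as [Hs|Hs].
  - apply (core A S Um (fun p => A p /\ ~ CAhat Up Um p)); auto.
    + apply HUm.
    + apply A_meets_clW; auto. destruct (Hub 0) as [w [Ww _]]. eauto.
    + intros p Ap Hc. split; auto. intros [_ H]. auto.
  - apply (core A S Up (fun p => A p /\ ~ CAhat Up Um p)); auto.
    + apply HUp.
    + apply A_meets_clW; auto. destruct (Hua 0) as [w [Ww _]]. eauto.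
    + intros p Ap Hc. split; auto. intros [H _]. auto.
Qed.
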